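(* Let $k\in\mathbb{N}$ and let $x_1,\ldots,x_k$ be positive reals with $x_1+\cdots+x_k<1$, $x_1\ge x_2\ge\cdots\ge x_k$, and $x_1\cdots x_j \le 1 - \sum_{i=1}^j x_i$ for all $j\in\{1,\ldots,k\}$. Then \[ x_1+\cdots+x_k \le \frac1{s_1}+\cdots+\frac1{s_k}, \] with equality if and only if $x_i = 1/s_i$ for all $i\in\{1,\ldots,k\}$.
   Context: The Sylvester sequence: $s_1 = 2$, $s_i = \prod_{j=1}^{i-1} s_j + 1$ for $i\ge2$. *)

(* Defs.v *)
From Stdlib Require Import Reals Arith List.
Open Scope R_scope.

(* Sylvester sequence, 1-indexed: sylv 1 = 2, sylv i = prod_{j<i} sylv j + 1.
   Auxiliary: sylv_prod n = prod_{j=1}^{n} sylv j (empty product = 1).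
   Then sylv (n+1) = sylv_prod n + 1 and sylv_prod (n+1) = sylv_prod n * sylv (n+1). *)
Fixpoint sylv_prod (n : nat) : nat :=
  match n with
  | O => 1%nat
  | S m => (sylv_prod m * (sylv_prod m + 1))%nat
  end.

Definition sylv (i : nat) : nat := (sylv_prod (Nat.pred i) + 1)%nat.

Fixpoint sum1 (f : nat -> R) (j : nat) : R :=
  match j with O => 0 | S m => sum1 f m + f (S m) end.
Fixpoint prod1 (f : nat -> R) (j : nat) : R :=
  match j with O => 1 | S m => prod1 f m * f (S m) end.

Example sylv_check : List.map sylv (1::2::3::4::5::nil)%nat = (2::3::7::43::1807::nil)%nat.
Proof. reflexivity. Qed.

(* Main.v *)
Require Import Defs.
From Stdlib Require Import Reals Arith Lra Lia Psatz.
Open Scope R_scope.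

Lemma key_ln (u v : R) : 0 < u -> 0 < v ->
  u - v <= u * (ln u - ln v) /\ (u <> v -> u - v < u * (ln u - ln v)).
Proof.
  intros hu hv.
  set (w := ln v - ln u).
  assert (Ew : exp w = v / u).
  { unfold w, Rminus. rewrite exp_plus. rewrite exp_ln by lra.
    rewrite exp_Ropp, exp_ln by lra. unfold Rdiv. ring. }
  assert (H1 : 1 + w <= v / u) by (rewrite <- Ew; apply exp_ineq1_le).
  assert (H1' : u * (1 + w) <= v).
  { apply Rmult_le_compat_l with (r := u) in H1; [|lra].
    replace (u * (v / u)) with v in H1 by (field; lra). exact H1. }
  split.
  - unfold w in H1'. nra.
  - intros hne.
    assert (wne : w <> 0).
    { intro h0. apply hne. unfold w in h0. apply ln_inv; lra. }
    assert (H2 : 1 + w < v / u) by (rewrite <- Ew; apply exp_ineq1; exact wne).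
    apply Rmult_lt_compat_l with (r := u) in H2; [|lra].
    replace (u * (v / u)) with v in H2 by (field; lra).
    unfold w in H2. nra.
Qed.

Lemma sum1_ext (f g : nat -> R) n :
  (forall i, (1 <= i <= n)%nat -> f i = g i) -> sum1 f n = sum1 g n.
Proof.
  induction n; intros H; simpl; auto.
  rewrite IHn by (intros; apply H; lia). rewrite H by lia. reflexivity.
Qed.

Lemma sum1_split (f : nat -> R) j n :
  sum1 f (j + n) = sum1 f j + sum1 (fun i => f (j + i)%nat) n.
Proof.
  induction n; simpl.
  - rewrite Nat.add_0_r. ring.
  - rewrite Nat.add_succ_r. simpl. rewrite IHn. ring.
Qed.

Lemma prod1_split (f : nat -> R) j n :
  prod1 f (j + n) = prod1 f j * prod1 (fun i => f (j + i)%nat) n.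
Proof.
  induction n; simpl.
  - rewrite Nat.add_0_r. ring.
  - rewrite Nat.add_succ_r. simpl. rewrite IHn. ring.
Qed.

Lemma prod1_pos (f : nat -> R) n :
  (forall i, (1 <= i <= n)%nat -> 0 < f i) -> 0 < prod1 f n.
Proof.
  induction n; intros H; simpl; [lra|].
  apply Rmult_lt_0_compat; [apply IHn; intros; apply H; lia | apply H; lia].
Qed.

Lemma nonneg_sum_zero (g : nat -> R) n :
  (forall i, (1 <= i <= n)%nat -> 0 <= g i) -> sum1 g n <= 0 ->
  forall i, (1 <= i <= n)%nat -> g i = 0.
Proof.
  induction n; intros H Hs i Hi; [lia|].
  simpl in Hs.
  assert (0 <= sum1 g n).
  { clear IHn Hs Hi i. induction n; simpl; [lra|].
    assert (0 <= g (S n)) by (apply H; lia).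
    assert (0 <= sum1 g n) by (apply IHn; intros; apply H; lia). lra. }
  assert (0 <= g (S n)) by (apply H; lia).
  destruct (Nat.eq_dec i (S n)) as [->|ne]; [lra|].
  apply IHn; [intros; apply H; lia | lra | lia].
Qed.

Lemma tail_lemma n (b c : nat -> R)
  (hb : forall i, (1 <= i <= n)%nat -> 0 < b i)
  (hc : forall i, (1 <= i <= n)%nat -> 0 < c i)
  (hd : forall i, (1 <= i < n)%nat -> b (S i) <= b i)
  (hp : forall l, (1 <= l <= n)%nat -> prod1 b l <= prod1 c l) :
  sum1 b n <= sum1 c n /\ (sum1 b n = sum1 c n -> forall i, (1 <= i <= n)%nat -> b i = c i).
Proof.
  set (L := fun i => ln (b i) - ln (c i)).
  assert (HL : forall l, (l <= n)%nat ->
     sum1 L l = ln (prod1 b l) - ln (prod1 c l) /\ 0 < prod1 b l /\ 0 < prod1 c l).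
  { induction l; intros hl; simpl.
    - rewrite ln_1. lra.
    - destruct IHl as [h1 [h2 h3]]; [lia|].
      assert (0 < b (S l)) by (apply hb; lia).
      assert (0 < c (S l)) by (apply hc; lia).
      rewrite !ln_mult by lra. rewrite h1. unfold L.
      split; [ring|]. split; apply Rmult_lt_0_compat; lra. }
  assert (HLam : forall l, (l <= n)%nat -> sum1 L l <= 0).
  { intros l hl. destruct (HL l hl) as [e [p1 p2]]. rewrite e.
    destruct l as [|l']; [simpl; rewrite ln_1; lra|].
    destruct (Rle_lt_or_eq_dec _ _ (hp (S l') ltac:(lia))) as [hlt|heq].
    - assert (ln (prod1 b (S l')) < ln (prod1 c (S l'))) by (apply ln_increasing; lra). lra.
    - rewrite heq; lra. }
  assert (Abel : forall l, (l <= n)%nat -> sum1 (fun i => b i * L i) l <= b l * sum1 L l).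
  { induction l; intros hl; simpl; [lra|].
    specialize (IHl ltac:(lia)).
    destruct l.
    - simpl. lra.
    - assert (b (S (S l)) <= b (S l)) by (apply hd; lia).
      assert (sum1 L (S l) <= 0) by (apply HLam; lia).
      nra. }
  set (g := fun i => b i * L i - (b i - c i)).
  assert (Hg : forall i, (1 <= i <= n)%nat -> 0 <= g i).
  { intros i hi. unfold g, L. destruct (key_ln (b i) (c i)); [apply hb; lia|apply hc; lia|]. lra. }
  assert (Lin : forall l, sum1 b l - sum1 c l + sum1 g l = sum1 (fun i => b i * L i) l).
  { induction l; simpl; [ring|]. rewrite <- IHl. unfold g. ring. }
  assert (Gpos : 0 <= sum1 g n).
  { clear - Hg. induction n; simpl; [lra|].
    assert (0 <= g (S n)) by (apply Hg; lia).
    assert (0 <= sum1 g n) by (apply IHn; intros; apply Hg; lia). lra. }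
  assert (Tot : sum1 b n - sum1 c n + sum1 g n <= 0).
  { rewrite Lin. specialize (Abel n (le_n n)). specialize (HLam n (le_n n)).
    destruct n; [simpl; lra|].
    assert (0 < b (S n)) by (apply hb; lia). nra. }
  split; [lra|].
  intros E i hi.
  assert (g i = 0) by (apply (nonneg_sum_zero g n); auto; lra).
  destruct (Req_dec (b i) (c i)) as [e|ne]; auto.
  destruct (key_ln (b i) (c i)) as [_ k2]; [apply hb; lia|apply hc; lia|].
  specialize (k2 ne). unfold g, L in *. lra.
Qed.

Lemma sylv_prod_ge1 j : (1 <= sylv_prod j)%nat.
Proof. induction j; simpl; nia. Qed.

Definition a (i : nat) : R := / INR (sylv i).
Definition Q (j : nat) : R := INR (sylv_prod j).

Lemma Q_ge1 j : 1 <= Q j.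
Proof. unfold Q. apply (le_INR 1). apply sylv_prod_ge1. Qed.

Lemma a_S j : a (S j) = / (Q j + 1).
Proof. unfold a, Q, sylv. simpl. rewrite plus_INR. simpl. reflexivity. Qed.

Lemma a_pos i : 0 < a i.
Proof. unfold a, sylv. apply Rinv_0_lt_compat. rewrite plus_INR. simpl.
  pose proof (pos_INR (sylv_prod (Nat.pred i))). lra. Qed.

Lemma Q_S j : Q (S j) = Q j * (Q j + 1).
Proof. unfold Q. simpl. rewrite mult_INR, plus_INR. simpl. reflexivity. Qed.

Lemma prod_a j : prod1 a j = / Q j /\ sum1 a j = 1 - / Q j.
Proof.
  induction j; simpl.
  - unfold Q; simpl. split; field.
  - destruct IHj as [h1 h2]. rewrite h1, h2, a_S, Q_S.
    pose proof (Q_ge1 j). split; field; lra.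
Qed.

Lemma exists_last (f : nat -> Prop) (dec : forall n, f n \/ ~ f n) :
  f 0%nat -> forall k, exists j, (j <= k)%nat /\ f j /\ forall i, (j < i <= k)%nat -> ~ f i.
Proof.
  intros f0 k. induction k.
  - exists 0%nat. split; [lia|]. split; auto. intros; lia.
  - destruct (dec (S k)) as [h|h].
    + exists (S k). split; [lia|]. split; auto. intros; lia.
    + destruct IHk as [j [h1 [h2 h3]]]. exists j. split; [lia|]. split; auto.
      intros i hi. destruct (Nat.eq_dec i (S k)) as [->|ne]; auto. apply h3; lia.
Qed.

Lemma main_core N : forall k, (k <= N)%nat -> forall (x : nat -> R)
  (hpos : forall i, (1 <= i <= k)%nat -> 0 < x i)
  (hdec : forall i, (1 <= i < k)%nat -> x (S i) <= x i)
  (hprod : forall j, (1 <= j <= k)%nat -> prod1 x j <= 1 - sum1 x j),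
  sum1 x k <= sum1 a k /\ (sum1 x k = sum1 a k -> forall i, (1 <= i <= k)%nat -> x i = a i).
Proof.
  induction N; intros k hk x hpos hdec hprod.
  { assert (k = 0%nat) by lia. subst. simpl. split; [lra|]. intros; lia. }
  destruct k as [|k'].
  { simpl. split; [lra|]. intros; lia. }
  set (k := S k') in *.
  destruct (Rlt_le_dec (prod1 a k) (prod1 x k)) as [hl|hl].
  { assert (prod1 x k <= 1 - sum1 x k) by (apply hprod; unfold k; lia).
    destruct (prod_a k) as [p1 p2].
    assert (sum1 x k < sum1 a k) by lra.
    split; [lra|]. intros; lra. }
  destruct (exists_last (fun j => prod1 a j <= prod1 x j)
     (fun n => match Rle_lt_dec (prod1 a n) (prod1 x n) with
               | left h => or_introl h | right h => or_intror (Rlt_not_le _ _ h) end)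
     ltac:(simpl; lra) k') as [j [hj1 [hj2 hj3]]].
  assert (hjk : (j < k)%nat) by (unfold k; lia).
  destruct (IHN j ltac:(unfold k in hk; lia) x) as [IH1 IH2].
  { intros; apply hpos; lia. }
  { intros; apply hdec; lia. }
  { intros; apply hprod; lia. }
  set (n := (k - j)%nat).
  assert (ek : k = (j + n)%nat) by (unfold n; lia).
  assert (Pj : 0 < prod1 x j) by (apply prod1_pos; intros; apply hpos; lia).
  assert (Aj : 0 < prod1 a j) by (apply prod1_pos; intros; apply a_pos).
  destruct (tail_lemma n (fun i => x (j + i)%nat) (fun i => a (j + i)%nat)) as [T1 T2].
  { intros; apply hpos; lia. }
  { intros; apply a_pos. }
  { intros i hi. replace (j + S i)%nat with (S (j + i)) by lia. apply hdec; lia. }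
  { intros l hl'.
    assert (hle : prod1 x (j + l) <= prod1 a (j + l)).
    { destruct (Nat.eq_dec (j + l) k) as [e|ne].
      - rewrite e. exact hl.
      - assert (~ prod1 a (j + l) <= prod1 x (j + l)) by (apply hj3; unfold k in *; lia).
        lra. }
    rewrite !prod1_split in hle.
    set (pb := prod1 (fun i => x (j + i)%nat) l) in *.
    set (pc := prod1 (fun i => a (j + i)%nat) l) in *.
    assert (0 < pc) by (apply prod1_pos; intros; apply a_pos).
    destruct (Rle_lt_dec pb pc) as [h|h]; auto.
    exfalso. nra. }
  assert (Sx : sum1 x k = sum1 x j + sum1 (fun i => x (j + i)%nat) n) by (rewrite ek; apply sum1_split).
  assert (Sa : sum1 a k = sum1 a j + sum1 (fun i => a (j + i)%nat) n) by (rewrite ek; apply sum1_split).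
  split; [lra|].
  intros E i hi.
  destruct (le_lt_dec i j) as [h|h].
  - apply IH2; [lra|lia].
  - replace i with (j + (i - j))%nat by lia.
    apply (T2 ltac:(lra) (i - j)%nat). unfold n. lia.
Qed.

Theorem mainTheorem14 (k : nat) (x : nat -> R)
  (hpos : forall i, (1 <= i <= k)%nat -> 0 < x i)
  (hsum : sum1 x k < 1)
  (hdec : forall i, (1 <= i < k)%nat -> x (S i) <= x i)
  (hprod : forall j, (1 <= j <= k)%nat -> prod1 x j <= 1 - sum1 x j) :
  sum1 x k <= sum1 (fun i => / INR (sylv i)) k /\
  (sum1 x k = sum1 (fun i => / INR (sylv i)) k <->
     forall i, (1 <= i <= k)%nat -> x i = / INR (sylv i)).
Proof.
  destruct (main_core k k (le_n k) x hpos hdec hprod) as [h1 h2].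
  fold a. split; [exact h1|]. split.
  - exact h2.
  - intros H. apply sum1_ext. exact H.
Qed.
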